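(* Let $(I^*,\pi^* )\in\mathcal I_L\times\mathbb R$ be a Pareto optimal contract with $\rho^{Pol}(I^*,\pi^* )=\rho^{Pol}(0,0)$. Then there exists a pricing distortion function $g^*_{I^*}$ such that $(I^*,g^*_{I^*})$ is a Stackelberg equilibrium and $\Pi_{g^*_{I^*}}(I^*(X))=\pi^*$.
   Context: $(\Omega,\mathcal F,\mathbb P)$ is a non-atomic probability space; $X\ge0$ is bounded with range $[0,M]$ and strictly increasing distribution function $F_X$. A distortion function is a non-decreasing differentiable map $h:[0,1]\to[0,1]$ with $h(0)=0$, $h(1)=1$; $\int Y\,\mathrm dh\circ\mathbb P=\int_0^\infty h(\mathbb P(Y\ge y))\mathrm dy+\int_{-\infty}^0[h(\mathbb P(Y\ge y))-1]\mathrm dy$. Policyholder distortion $T$, $\rho^{Pol}(Z)=\int Z\,\mathrm dT\circ\mathbb P$; pricing distortion $g$, $\Pi_g(I(X))=\int I(X)\,\mathrm dg\circ\mathbb P$. $\mathcal I_L=\{I:[0,M]\to[0,M]: I(0)=0,\ 0\le I(x_1)-I(x_2)\le x_1-x_2\ \forall x_2\le x_1\}$; for a mechanism, $\rho^{Pol}(I,g)=\rho^{Pol}(X-I(X)+\Pi_g(I(X)))$ and $V^{In}(I,g)=\Pi_g(I(X))-\mathbb E[I(X)]$. $(I^*,g^* )$ is a Stackelberg equilibrium if (i) $I^*\in\arg\min_{I\in\mathcal I_L}\rho^{Pol}(I,g^* )$ and (ii) $V^{In}(I^*,g^* )\ge V^{In}(I,g)$ for all $(I,g)$ with $I\in\arg\min_{\bar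 I\in\mathcal I_L}\rho^{Pol}(\bar I,g)$. For a contract $(I,\pi)\in\mathcal I_L\times\mathbb R$: $\rho^{Pol}(I,\pi)=\rho^{Pol}(X-I(X)+\pi)$, $V^{In}(I,\pi)=\pi-\mathbb E[I(X)]$; it is Pareto optimal if no $(I',\pi')$ has $\rho^{Pol}(I',\pi')\le\rho^{Pol}(I,\pi)$ and $V^{In}(I',\pi')\ge V^{In}(I,\pi)$ with at least one strict inequality. *)

(* Defs.v *)
From HB Require Import structures.
From mathcomp Require Import all_boot all_order all_algebra.
From mathcomp Require Import all_classical all_reals all_analysis.
Set Implicit Arguments. Unset Strict Implicit. Unset Printing Implicit Defensive.
Import Order.TTheory GRing.Theory Num.Theory.
Import numFieldNormedType.Exports.
Local Open Scope classical_set_scope.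
Local Open Scope ring_scope.

Section Defs.
Context (R : realType) (d : measure_display) (T : measurableType d)
        (P : probability T R).

Definition nonatomic : Prop :=
  forall A : set T, measurable A -> (0 < P A)%E ->
    exists B : set T, [/\ measurable B, B `<=` A, (0 < P B)%E & (P B < P A)%E].

Definition distr_fun (X : T -> R) (x : R) : R := fine (P [set w | X w <= x]).

Definition differentiable01 (h : R -> R) : Prop :=
  forall x : R, 0 <= x <= 1 ->
    exists l : R,
      (fun y => (h y - h x) / (y - x)) @
        within (fun y : R => 0 <= y <= 1 /\ y != x) (nbhs x) --> l.

Definition distortion (h : R -> R) : Prop :=
  [/\ forall x, 0 <= x <= 1 -> 0 <= h x <= 1,
      forall x y, 0 <= x -> x <= y -> y <= 1 -> h x <= h y,
      differentiable01 h,
      h 0 = 0 & h 1 = 1].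

Definition choquet (h : R -> R) (Y : T -> R) : R :=
  fine (\int[lebesgue_measure]_(y in `[0, +oo[)
          (h (fine (P [set w | y <= Y w])))%:E)
  + fine (\int[lebesgue_measure]_(y in `]-oo, 0[)
          (h (fine (P [set w | y <= Y w])) - 1)%:E).

Definition expect (Y : T -> R) : R := fine (\int[P]_w (Y w)%:E).

Definition IL (M : R) (I : R -> R) : Prop :=
  [/\ I 0 = 0,
      forall x, 0 <= x <= M -> 0 <= I x <= M &
      forall x1 x2, 0 <= x2 -> x2 <= x1 -> x1 <= M ->
        0 <= I x1 - I x2 <= x1 - x2].

Definition rhoPol_mech (Tf : R -> R) (X : T -> R) (I g : R -> R) : R :=
  choquet Tf (fun w => X w - I (X w) + choquet g (fun w' => I (X w'))).

Definition VIn_mech (X : T -> R) (I g : R -> R) : R :=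
  choquet g (fun w => I (X w)) - expect (fun w => I (X w)).

Definition best_response (M : R) (Tf : R -> R) (X : T -> R) (g I : R -> R)
  : Prop :=
  IL M I /\ forall I', IL M I' -> rhoPol_mech Tf X I g <= rhoPol_mech Tf X I' g.

Definition stackelberg (M : R) (Tf : R -> R) (X : T -> R) (Is gs : R -> R)
  : Prop :=
  [/\ distortion gs,
      best_response M Tf X gs Is &
      forall I g, distortion g -> best_response M Tf X g I ->
        VIn_mech X I g <= VIn_mech X Is gs].

Definition rhoPol_ctr (Tf : R -> R) (X : T -> R) (I : R -> R) (pi : R) : R :=
  choquet Tf (fun w => X w - I (X w) + pi).

Definition VIn_ctr (X : T -> R) (I : R -> R) (pi : R) : R :=
  pi - expect (fun w => I (X w)).

Definition pareto_optimal (M : R) (Tf : R -> R) (X : T -> R)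
  (I : R -> R) (pi : R) : Prop :=
  IL M I /\
  ~ exists I' pi', [/\ IL M I',
      rhoPol_ctr Tf X I' pi' <= rhoPol_ctr Tf X I pi,
      VIn_ctr X I pi <= VIn_ctr X I' pi' &
      rhoPol_ctr Tf X I' pi' < rhoPol_ctr Tf X I pi \/
      VIn_ctr X I pi < VIn_ctr X I' pi'].

End Defs.

(* Main.v *)
Require Import Defs.
From HB Require Import structures.
From mathcomp Require Import all_boot all_order all_algebra.
From mathcomp Require Import all_classical all_reals all_analysis.
From mathcomp Require Import measurable_realfun lra ring.
Import Order.TTheory GRing.Theory Num.Theory.
Import numFieldNormedType.Exports.
Set Implicit Arguments. Unset Strict Implicit. Unset Printing Implicit Defensive.
Local Open Scope classical_set_scope.
Local Open Scope ring_scope.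

Section Helpers.
Context (R : realType) (d : measure_display) (T : measurableType d)
  (P : probability T R).

Notation mu := (@lebesgue_measure R).

Definition Dh (h : R -> R) (Y : T -> R) (y : R) : R :=
  h (fine (P [set w | y <= Y w])).

Lemma Pfin A : measurable A -> P A \is a fin_num.
Proof.
move=> mA; rewrite ge0_fin_numE ?measure_ge0 //.
exact: (le_lt_trans (probability_le1 P mA) (ltry _)).
Qed.

Lemma fineP01 A : measurable A -> 0 <= fine (P A) <= 1.
Proof.
move=> mA; have h1 := probability_le1 P mA; have h0 := measure_ge0 P A.
have hf := Pfin mA.
by rewrite -!lee_fin fineK // h0 h1.
Qed.

Lemma fineP_le A B : measurable A -> measurable B -> A `<=` B ->
  fine (P A) <= fine (P B).
Proof.
move=> mA mB AB; apply: fine_le; [exact: Pfin|exact: Pfin|].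
exact: (le_measure _ (mem_set mA) (mem_set mB) AB).
Qed.

Lemma int_bnd (f : R -> R) (A : set R) c : measurable A ->
  (mu A < +oo)%E -> measurable_fun A f ->
  (forall x, A x -> `|f x| <= c) -> mu.-integrable A (EFin \o f).
Proof.
move=> mA Afin mf fc; apply: measurable_bounded_integrable => //.
exists c; split; first exact: num_real.
move=> M cM x Ax; apply: (le_trans (fc x Ax)); exact: ltW.
Qed.

Lemma mu_itv u v : u <= v ->
  mu [set` Interval (BRight u) (BRight v)] = (v - u)%:E.
Proof.
move=> uv; rewrite lebesgue_measure_itv /=.
case: ifPn; rewrite lte_fin; first by rewrite EFinB.
rewrite -leNgt => vu; have -> : v = u by apply/le_anti/andP.
by rewrite subrr.
Qed.


Definition Itv (u v : R) : set R := [set` Interval (BRight u) (BRight v)].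

Lemma Itv_meas u v : measurable (Itv u v).
Proof. exact: measurable_itv. Qed.

Lemma Itv_fin u v : (mu (Itv u v) < +oo)%E.
Proof.
rewrite /Itv lebesgue_measure_itv /=; case: ifPn => _; last exact: ltry.
by rewrite -EFinD ltry.
Qed.

Lemma Rint_cst u v c : u <= v -> Rintegral mu (Itv u v) (fun=> c) = c * (v - u).
Proof.
move=> uv; rewrite Rintegral_cst; last exact: measurable_itv.
congr (_ * _); exact: (congr1 fine (mu_itv uv)).
Qed.

Lemma D01 h Y y : distortion h -> measurable [set w | y <= Y w] ->
  0 <= Dh h Y y <= 1.
Proof. by move=> [h01 _ _ _ _] m; apply: h01; exact: fineP01. Qed.

Lemma D_mono h Y : distortion h -> (forall y, measurable [set w | y <= Y w]) ->
  forall y1 y2, y1 <= y2 -> Dh h Y y2 <= Dh h Y y1.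
Proof.
move=> [h01 hm _ _ _] hY y1 y2 y12; rewrite /Dh.
have /andP[a _] := fineP01 (hY y2); have /andP[_ b] := fineP01 (hY y1).
apply: hm => //; apply: fineP_le => // w /=; exact: le_trans.
Qed.

Lemma D_meas h Y : distortion h -> (forall y, measurable [set w | y <= Y w]) ->
  measurable_fun setT (Dh h Y).
Proof.
move=> hd hY; apply: nonincreasing_measurable => // x y xy.
exact: D_mono.
Qed.

Lemma D_int h Y A : distortion h -> (forall y, measurable [set w | y <= Y w]) ->
  measurable A -> (mu A < +oo)%E -> mu.-integrable A (EFin \o Dh h Y).
Proof.
move=> hd hY mA Af; apply: (@int_bnd _ _ 1) => //.
  exact: measurable_funS (D_meas hd hY).
move=> x _; have /andP[a b] := D01 hd (hY x).
by rewrite ger0_norm.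
Qed.

Lemma RintD_bnd h Y u v c1 c2 : distortion h ->
  (forall y, measurable [set w | y <= Y w]) -> u <= v ->
  (forall y, u < y -> y <= v -> c1 <= Dh h Y y <= c2) ->
  c1 * (v - u) <= Rintegral mu (Itv u v) (Dh h Y) <= c2 * (v - u).
Proof.
move=> hd hY uv hc.
have hi := D_int hd hY (Itv_meas u v) (Itv_fin u v).
have ci c : mu.-integrable (Itv u v) (EFin \o (fun=> c)).
  apply: (@int_bnd _ _ `|c|); [exact: Itv_meas|exact: Itv_fin|exact: measurable_cst|by []].
apply/andP; split.
  rewrite -Rint_cst //; apply: le_Rintegral => //; first exact: Itv_meas.
  by move=> y; rewrite /Itv /= in_itv /= => /andP[a b]; have /andP[] := hc y a b.
rewrite -Rint_cst //; apply: le_Rintegral => //; first exact: Itv_meas.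
by move=> y; rewrite /Itv /= in_itv /= => /andP[a b]; have /andP[] := hc y a b.
Qed.


Lemma itv_fin (a b : R) (b0 b1 : bool) :
  (mu [set` Interval (BSide b0 a) (BSide b1 b)] < +oo)%E.
Proof.
rewrite lebesgue_measure_itv /=; case: ifPn => _; last exact: ltry.
by rewrite -EFinD ltry.
Qed.

Lemma mu_itv' (b0 b1 : bool) (a b : R) : a <= b ->
  fine (mu [set` Interval (BSide b0 a) (BSide b1 b)]) = b - a.
Proof.
move=> ab; rewrite lebesgue_measure_itv /=.
case: b0; case: b1 => /=; (case: ifPn => [_ //|]; rewrite lte_fin -leNgt => ba;
  have -> : b = a by apply/le_anti/andP); by rewrite subrr.
Qed.

Lemma Rint_cst' (b0 b1 : bool) (a b c : R) : a <= b ->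
  Rintegral mu [set` Interval (BSide b0 a) (BSide b1 b)] (fun=> c) = c * (b - a).
Proof.
move=> ab; rewrite Rintegral_cst; last exact: measurable_itv.
congr (_ * _); exact: (congr1 id (mu_itv' b0 b1 ab)).
Qed.

Lemma D_set0 h Y y : distortion h -> (forall w, Y w < y) -> Dh h Y y = 0.
Proof.
move=> [_ _ _ h0 _] hy; rewrite /Dh.
have -> : [set w | y <= Y w] = set0.
  by apply/seteqP; split => // w /=; rewrite leNgt hy.
by rewrite measure0 /= h0.
Qed.

Lemma D_setT h Y y : distortion h -> (forall w, y <= Y w) -> Dh h Y y = 1.
Proof.
move=> [_ _ _ _ h1] hy; rewrite /Dh.
have -> : [set w | y <= Y w] = setT.
  by apply/seteqP; split => // w _ /=; exact: hy.
by rewrite probability_setT /= h1.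
Qed.

Lemma choquet_repr h Y K : distortion h ->
  (forall y, measurable [set w | y <= Y w]) -> 0 <= K ->
  (forall w, -K <= Y w <= K) ->
  choquet P h Y = Rintegral mu (Itv (-K) K) (Dh h Y) - K.
Proof.
move=> hd hY K0 hK.
have -> : choquet P h Y = Rintegral mu `[0, +oo[ (Dh h Y) +
        Rintegral mu `]-oo, 0[ (fun y => Dh h Y y - 1) by [].
have E1 : Rintegral mu `[0, +oo[ (Dh h Y) = Rintegral mu `]0, K] (Dh h Y).
  rewrite (@Rintegral_itv_obnd_cbnd _ 0 (BRight K)); last first.
    by apply: D_int => //; exact: itv_fin.
  transitivity (Rintegral mu `[0, +oo[ ((Dh h Y) \_ `[0, K])).
    apply: eq_Rintegral => y; rewrite inE /= in_itv /= andbT => y0.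
    rewrite /restrict; case: ifPn => //; rewrite notin_setE /= in_itv /= y0 /= => /negP; rewrite -ltNge => Ky.
    have -> : (point : R) = 0 by [].
    apply: D_set0 => // w; have /andP[_ b] := hK w; exact: le_lt_trans Ky.
  rewrite -Rintegral_mkcondr; congr Rintegral.
  apply/seteqP; split => y /=; rewrite !in_itv /= ?andbT; first by case.
  by move=> H; split => //; case/andP: H.
have E2 : Rintegral mu `]-oo, 0[ (fun y => Dh h Y y - 1) =
          Rintegral mu (Itv (-K) 0) (Dh h Y) - K.
  transitivity (Rintegral mu `]-oo, 0[ ((fun y => Dh h Y y - 1) \_ `]-K, 0[)).
    apply: eq_Rintegral => y; rewrite inE /= in_itv /= => y0.
    rewrite /restrict; case: ifPn => //; rewrite notin_setE /= in_itv /= y0 andbT => /negP; rewrite -leNgt => Ky.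
    have -> : (point : R) = 0 by [].
    rewrite D_setT ?subrr // => w; have /andP[a _] := hK w; exact: le_trans a.
  rewrite -Rintegral_mkcondr.
  have -> : `]-oo, 0[ `&` `]-K, 0[%classic = `]-K, 0[%classic :> set R.
    apply/seteqP; split => y /=; rewrite !in_itv /= ?andbT; first by case.
    by move=> H; split => //; case/andP: H.
  rewrite RintegralB; [|exact: measurable_itv| |]; last first.
  - apply: (@int_bnd _ _ 1); [exact: measurable_itv|exact: itv_fin|exact: measurable_cst|].
    by move=> *; rewrite normr1.
  - by apply: D_int => //; exact: itv_fin.
  rewrite Rint_cst' ?oppr_le0 // sub0r opprK mul1r.
  by rewrite /Itv Rintegral_itv_bndo_bndc //; apply: D_int => //; exact: itv_fin.
rewrite E1 E2 addrA; congr (_ - _).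
have := @Rintegral_itvB _ (Dh h Y) (BRight (-K)) (BRight K) 0.
rewrite /Itv => <- //.
- by rewrite subrK.
- by apply: D_int => //; exact: itv_fin.
- by rewrite bnd_simp oppr_le0.
Qed.


Context (X : T -> R) (M : R) (hX : measurable_fun setT X) (M0 : 0 <= M)
  (hXM : forall w, 0 <= X w <= M).

Definition nd (f : R -> R) := forall x y, 0 <= x -> x <= y -> y <= M -> f x <= f y.

Definition cl (x : R) : R := if x < 0 then 0 else if x <= M then x else M.

Lemma cl_nd : nondecreasing_fun cl.
Proof.
move=> x y xy; have := M0; rewrite /cl.
have [x0|x0] := ltP x 0; have [y0|y0] := ltP y 0;
  have [xM|xM] := leP x M; have [yM|yM] := leP y M; rewrite /= => m0; lra.
Qed.

Lemma cl_in x : 0 <= x -> x <= M -> cl x = x.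
Proof. by move=> x0 xM; rewrite /cl ltNge x0 /= xM. Qed.

Lemma cl_01 x : 0 <= cl x <= M.
Proof.
have := M0; rewrite /cl; have [x0|x0] := ltP x 0; have [xM|xM] := leP x M;
  rewrite /= => m0; apply/andP; split; lra.
Qed.

Lemma level_meas f : nd f -> forall y, measurable [set w | y <= f (X w)].
Proof.
move=> fnd y.
have Fnd : nondecreasing_fun (fun x => f (cl x)).
  move=> a b ab; have /andP[a0 aM] := cl_01 a; have /andP[b0 bM] := cl_01 b.
  by apply: fnd => //; exact: cl_nd.
have mF := measurableT_comp (nondecreasing_measurable measurableT Fnd) hX.
have := mF measurableT _ (@measurable_itv _ `[y, +oo[).
congr measurable; apply/seteqP; split => w /=.
  by case => _; rewrite in_itv /= andbT; have /andP[a b] := hXM w; rewrite cl_in.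
by move=> H; split => //; rewrite in_itv /= andbT; have /andP[a b] := hXM w; rewrite cl_in.
Qed.

Lemma nd_id : nd id.
Proof. by []. Qed.

Lemma Dh_le h Y1 Y2 y1 y2 : distortion h ->
  measurable [set w | y1 <= Y1 w] -> measurable [set w | y2 <= Y2 w] ->
  [set w | y1 <= Y1 w] `<=` [set w | y2 <= Y2 w] -> Dh h Y1 y1 <= Dh h Y2 y2.
Proof.
move=> [h01 hm _ _ _] m1 m2 sub; rewrite /Dh.
have /andP[a _] := fineP01 m1; have /andP[_ b] := fineP01 m2.
by apply: hm => //; exact: fineP_le.
Qed.

Definition S h := Dh h X.

Lemma S_bnd h f z z' y : distortion h -> nd f -> 0 <= z -> z <= z' -> z' <= M ->
  f z < y -> y <= f z' ->
  S h z' <= Dh h (fun w => f (X w)) y <= S h z.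
Proof.
move=> hd fnd z0 zz z'M fy yf.
have mX := level_meas nd_id.
apply/andP; split; apply: Dh_le => //; try exact: level_meas.
  move=> w /= xw; have /andP[a b] := hXM w.
  by apply: (le_trans yf); apply: fnd => //; exact: le_trans zz.
move=> w /= yw; have /andP[a b] := hXM w; rewrite leNgt; apply/negP => xz.
have : f (X w) <= f z by apply: fnd => //; [exact: ltW|exact: le_trans z'M].
by rewrite leNgt (lt_le_trans fy yw).
Qed.


Lemma fbound f : nd f -> forall x, 0 <= x -> x <= M ->
  -(`|f 0| + `|f M|) <= f x <= `|f 0| + `|f M|.
Proof.
move=> fnd x x0 xM; have a := fnd 0 x (lexx _) x0 xM.
have b := fnd x M x0 xM (lexx _).
have c := ler_norm (f 0); have e := ler_norm (f M).
have c' := ler_normr (f 0) (f 0); have e' := normr_ge0 (f M).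
have c'' : - `|f 0| <= f 0 by rewrite lerNl -normrN ler_norm.
apply/andP; split; lra.
Qed.

Lemma Rint_val h Y u v c : u <= v -> (forall y, u < y -> y <= v -> Dh h Y y = c) ->
  Rintegral mu (Itv u v) (Dh h Y) = c * (v - u).
Proof.
move=> uv hc; rewrite -Rint_cst //; apply: eq_Rintegral => y.
by rewrite inE /Itv /= in_itv /= => /andP[a b]; exact: hc.
Qed.

Definition Phi h f K z := Rintegral mu (Itv (-K) (f z)) (Dh h (fun w => f (X w))).

Lemma Phi_incr h f K z z' : distortion h -> nd f -> -K <= f z -> f z <= f z' ->
  Phi h f K z' - Phi h f K z = Rintegral mu (Itv (f z) (f z')) (Dh h (fun w => f (X w))).
Proof.
move=> hd fnd Kz zz; rewrite /Phi /Itv.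
apply: Rintegral_itvB => //.
- by apply: D_int => //; [exact: level_meas|exact: itv_fin].
Qed.


Lemma Phi_M h f K : distortion h -> nd f -> (forall x, 0 <= x -> x <= M -> -K <= f x <= K) ->
  Rintegral mu (Itv (-K) K) (Dh h (fun w => f (X w))) = Phi h f K M.
Proof.
move=> hd fnd fK; have /andP[a b] := fK M M0 (lexx _).
apply/eqP; rewrite -subr_eq0; apply/eqP; rewrite /Phi /Itv Rintegral_itvB //.
- rewrite -/(Itv (f M) K) (@Rint_val _ _ _ _ 0) ?mul0r // => y fy yK.
  apply: D_set0 => // w; have /andP[c e] := hXM w.
  by apply: le_lt_trans fy; apply: fnd.
- by apply: D_int => //; [exact: level_meas|exact: itv_fin].
Qed.

Lemma Phi_0 h f K : distortion h -> nd f -> (forall x, 0 <= x -> x <= M -> -K <= f x <= K) ->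
  Phi h f K 0 = f 0 + K.
Proof.
move=> hd fnd fK; have /andP[a b] := fK 0 (lexx _) M0.
rewrite /Phi (@Rint_val _ _ _ _ 1) // ?mul1r ?opprK // => y _ y0.
apply: D_setT => // w; have /andP[c e] := hXM w.
by apply: le_trans y0 _; apply: fnd.
Qed.

Lemma incr_bnd h f K z z' : distortion h -> nd f ->
  (forall x, 0 <= x -> x <= M -> -K <= f x <= K) ->
  0 <= z -> z <= z' -> z' <= M ->
  S h z' * (f z' - f z) <= Phi h f K z' - Phi h f K z <= S h z * (f z' - f z).
Proof.
move=> hd fnd fK z0 zz z'M.
have zM : z <= M by exact: le_trans zz z'M.
have /andP[a _] := fK z z0 zM.
have fzz := fnd z z' z0 zz z'M.
rewrite Phi_incr //; apply: RintD_bnd => //; first exact: level_meas.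
move=> y fy yf; exact: S_bnd.
Qed.


Lemma small0 (e : R) : 0 <= e -> (forall n : nat, (0 < n)%N -> e <= M / n%:R) -> e = 0.
Proof.
move=> e0 H; apply/eqP; rewrite eq_le e0 andbT; rewrite leNgt; apply/negP => ep.
set n := (Num.Def.archi_bound (M / e)).+1.
have n0 : (0 < n)%N by [].
have hn := H n n0.
have N0 : (0 : R) < n%:R by rewrite ltr0n.
have a : M / e < n%:R.
  apply: (lt_le_trans (archi_boundP _)); first by rewrite divr_ge0.
  by rewrite ler_nat.
move: a hn; rewrite ltr_pdivrMr // ler_pdivlMr //; nra.
Qed.

Lemma comono h f1 f2 f3 : distortion h -> nd f1 -> nd f2 ->
  (forall x, 0 <= x -> x <= M -> f3 x = f1 x + f2 x) ->
  (forall x y, 0 <= x -> x <= y -> y <= M -> f3 y - f3 x <= y - x) ->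
  choquet P h (fun w => f1 (X w)) + choquet P h (fun w => f2 (X w)) =
  choquet P h (fun w => f3 (X w)).
Proof.
move=> hd n1 n2 e3 l3.
have n3 : nd f3.
  move=> x y x0 xy yM; have xM := le_trans xy yM; have y0 := le_trans x0 xy.
  rewrite !e3 //; have := n1 x y x0 xy yM; have := n2 x y x0 xy yM; lra.
set K1 := `|f1 0| + `|f1 M|; set K2 := `|f2 0| + `|f2 M|.
have b1 : forall x, 0 <= x -> x <= M -> -K1 <= f1 x <= K1 := fbound n1.
have b2 : forall x, 0 <= x -> x <= M -> -K2 <= f2 x <= K2 := fbound n2.
have b3 : forall x, 0 <= x -> x <= M -> -(K1 + K2) <= f3 x <= K1 + K2.
  move=> x x0 xM; rewrite e3 //; have /andP[a b] := b1 x x0 xM.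
  have /andP[c e] := b2 x x0 xM; apply/andP; split; lra.
have K10 : 0 <= K1 by rewrite addr_ge0.
have K20 : 0 <= K2 by rewrite addr_ge0.
have hw (f : R -> R) (K : R) : (forall x, 0 <= x -> x <= M -> -K <= f x <= K) -> forall w, -K <= f (X w) <= K.
  by move=> fb w; have /andP[a b] := hXM w; exact: fb.
rewrite (choquet_repr hd (level_meas n1) K10 (hw _ _ b1)).
rewrite (choquet_repr hd (level_meas n2) K20 (hw _ _ b2)).
rewrite (choquet_repr hd (level_meas n3) (addr_ge0 K10 K20) (hw _ _ b3)).
rewrite (Phi_M hd n1 b1) (Phi_M hd n2 b2) (Phi_M hd n3 b3).
pose E z := Phi h f1 K1 z + Phi h f2 K2 z - Phi h f3 (K1 + K2) z.
suff : E M = 0 by rewrite /E; lra.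
have E0 : E 0 = 0.
  rewrite /E (Phi_0 hd n1 b1) (Phi_0 hd n2 b2) (Phi_0 hd n3 b3) e3 //; lra.
have Smono z z' : z <= z' -> S h z' <= S h z.
  by move=> zz; apply: D_mono => //; exact: (level_meas nd_id).
have S01 z : 0 <= S h z <= 1 by apply: D01 => //; exact: (level_meas nd_id).
have incr z z' : 0 <= z -> z <= z' -> z' <= M ->
    `|E z' - E z| <= (S h z - S h z') * (z' - z).
  move=> z0 zz z'M; have zM := le_trans zz z'M.
  have /andP[a1 c1] := incr_bnd hd n1 b1 z0 zz z'M.
  have /andP[a2 c2] := incr_bnd hd n2 b2 z0 zz z'M.
  have /andP[a3 c3] := incr_bnd hd n3 b3 z0 zz z'M.
  have e := l3 z z' z0 zz z'M.
  have ez := e3 z z0 zM; have ez' := e3 z' (le_trans z0 zz) z'M.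
  have d1 := n1 z z' z0 zz z'M; have d2 := n2 z z' z0 zz z'M.
  have sm := Smono z z' zz; have /andP[s0 _] := S01 z'.
  rewrite ler_norml /E; apply/andP; split; nra.
apply/normr0_eq0; apply: small0; first exact: normr_ge0.
move=> n n0; have N0 : (0 : R) < n%:R by rewrite ltr0n.
pose st := M / n%:R.
have st0 : 0 <= st by rewrite divr_ge0 // ler0n.
have key : forall k, (k <= n)%N -> `|E (k%:R * st) - E 0| <= (S h 0 - S h (k%:R * st)) * st.
  elim => [|k IH] kn.
    have -> : (0%:R : R) * st = 0 by rewrite mul0r.
    by rewrite !subrr normr0 mul0r.
  have kn' : (k <= n)%N by exact: ltnW.
  have Hk := IH kn'.
  have z0 : 0 <= k%:R * st by rewrite mulr_ge0 // ler0n.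
  have zz : k%:R * st <= k.+1%:R * st by rewrite ler_wpM2r // ler_nat.
  have z'M : k.+1%:R * st <= M.
    by rewrite /st mulrA ler_pdivrMr // mulrC ler_wpM2l // ler_nat.
  have := incr _ _ z0 zz z'M.
  have -> : k.+1%:R * st - k%:R * st = st by rewrite -mulrBl -natrB // subSnn mul1r.
  move=> Hs.
  have T1 := ler_normD (E (k.+1%:R * st) - E (k%:R * st)) (E (k%:R * st) - E 0).
  have -> : E (k.+1%:R * st) - E 0 =
    (E (k.+1%:R * st) - E (k%:R * st)) + (E (k%:R * st) - E 0) by ring.
  nra.
have := key n (leqnn n).
have -> : n%:R * st = M by rewrite /st mulrC divfK // gt_eqF.
rewrite E0 subr0 => H.
apply: (le_trans H); have /andP[a _] := S01 M; have /andP[_ b] := S01 0.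
rewrite -/st; nra.
Qed.


Lemma choquet_cst h c : distortion h -> choquet P h (fun _ => c) = c.
Proof.
move=> hd.
have nc : nd (fun=> c) by move=> *; exact: lexx.
have bc : forall x, 0 <= x -> x <= M -> - `|c| <= (fun=> c) x <= `|c|.
  by move=> x _ _ /=; rewrite -ler_norml.
transitivity (Rintegral mu (Itv (-`|c|) `|c|) (Dh h (fun w => (fun=> c) (X w))) - `|c|).
  apply: choquet_repr => //; first exact: level_meas.
  by move=> w; rewrite -ler_norml.
have := Phi_M hd nc bc; rewrite /= => ->.
have -> : Phi h (fun=> c) `|c| M = Phi h (fun=> c) `|c| 0 by [].
by rewrite (Phi_0 hd nc bc) addrK.
Qed.

End Helpers.


Unset Implicit Arguments.

Theorem proposition3 (R : realType) (d : measure_display) (T : measurableType d)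
  (P : probability T R) (X : T -> R) (M : R) (Tf : R -> R)
  (Is : R -> R) (pis : R) :
  nonatomic P ->
  measurable_fun setT X ->
  0 < M ->
  (forall w, 0 <= X w <= M) ->
  (forall x y, 0 <= x -> x < y -> y <= M -> distr_fun P X x < distr_fun P X y) ->
  distortion Tf ->
  pareto_optimal P M Tf X Is pis ->
  rhoPol_ctr P Tf X Is pis = rhoPol_ctr P Tf X (fun _ => 0) 0 ->
  exists gs : R -> R,
    stackelberg P M Tf X Is gs /\ choquet P gs (fun w => Is (X w)) = pis.
Proof.
move=> _ hX M0' hXM _ hT [hIs hpar] hrho.
have M0 : 0 <= M by exact: ltW.
have IL0 : IL M (fun _ => 0).
  split => //; first by move=> x _; rewrite lexx.
  by move=> x1 x2 x20 x21 _; rewrite subrr lexx subr_ge0.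
have ndI I : IL M I -> nd M I.
  move=> [_ _ hI] x y x0 xy yM; have := hI y x x0 xy yM.
  by rewrite subr_ge0 => /andP[].
have ndA I : IL M I -> nd M (fun x => x - I x).
  move=> [_ _ hI] x y x0 xy yM; have /andP[_ e] := hI y x x0 xy yM.
  rewrite /=; lra.
have shift I c : IL M I ->
    choquet P Tf (fun w => X w - I (X w) + c) =
    choquet P Tf (fun w => X w - I (X w)) + c.
  move=> hI.
  have L : forall x y, 0 <= x -> x <= y -> y <= M ->
      y - I y + c - (x - I x + c) <= y - x.
    move=> x y x0 xy yM; case: hI => _ _ hI; have /andP[e _] := hI y x x0 xy yM.
    have -> : y - I y + c - (x - I x + c) = (y - x) - (I y - I x) by ring.
    by rewrite lerBlDr lerDl.
  have := @comono _ _ _ P X M hX M0 hXM Tf (fun x => x - I x) (fun=> c)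
    (fun x => x - I x + c) hT (ndA I hI) (fun x y _ _ _ => lexx c) (fun x _ _ => erefl) L.
  by rewrite (choquet_cst P hX M0 hXM c hT) => <-.
have split I : IL M I ->
    choquet P Tf (fun w => X w - I (X w)) + choquet P Tf (fun w => I (X w)) =
    choquet P Tf X.
  move=> hI.
  have := @comono _ _ _ P X M hX M0 hXM Tf (fun x => x - I x) I
    (fun x => x) hT (ndA I hI) (ndI I hI) _ _.
  apply.
  - by move=> x _ _; rewrite subrK.
  - by move=> x y _ _ _; rewrite lexx.
have key I : IL M I -> rhoPol_mech P Tf X I Tf = choquet P Tf X.
  by move=> hI; rewrite /rhoPol_mech shift // split.
have hX0 : rhoPol_ctr P Tf X (fun _ => 0) 0 = choquet P Tf X.
  rewrite /rhoPol_ctr; congr choquet; apply/funext => w; by rewrite subr0 addr0.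
have Cpis : choquet P Tf (fun w => Is (X w)) = pis.
  have := hrho; rewrite hX0 /rhoPol_ctr shift // => H.
  have := split Is hIs; lra.
exists Tf; split; last exact: Cpis.
split; first exact: hT.
- split; first exact: hIs.
  by move=> I' hI'; rewrite (key Is hIs) (key I' hI') lexx.
- move=> I g hg [hI hbr]; rewrite leNgt; apply/negP => H.
  apply: hpar; exists I, (choquet P g (fun w => I (X w))); split.
  + exact: hI.
  + have := hbr _ IL0; rewrite /rhoPol_mech.
    rewrite (choquet_cst P hX M0 hXM 0 hg).
    have -> : (fun w => X w - 0 + 0) = X by apply/funext => w; rewrite subr0 addr0.
    by rewrite hrho hX0.
  + by move: H; rewrite /VIn_mech /VIn_ctr Cpis => /ltW.
  + by right; move: H; rewrite /VIn_mech /VIn_ctr Cpis.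
Qed.
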